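(* Let $\mathcal{A}=\{1,\dots,K\}$, let $a^*\in\mathcal{A}$, $T\ge1$, $\sigma>0$, and for each $a\in\mathcal{A}$ let $m_a\ge1$ be an integer and $\vec{y}_a\in\mathbb{R}^{m_a}$. For perturbations $\vec{\epsilon}_a\in\mathbb{R}^{m_a}$ put $\tilde{\mu}_a=(\vec{y}_a+\vec{\epsilon}_a)^T\mathbf{1}/m_a$ and $$u_a(T+1)=\tilde{\mu}_a+3\sigma\sqrt{\frac{\log(T+1)}{m_a}}.$$ Fix a margin $\xi>0$ and consider $$P_2:\quad \min_{\{\vec{\epsilon}_a\}_{a\in\mathcal{A}}}\ \sum_{a\in\mathcal{A}}\|\vec{\epsilon}_a\|_2^2\quad\text{s.t.}\quad u_{a^*}(T+1)\geq u_a(T+1)+\xi\ \ \forall a\neq a^*.$$ Then $P_2$ is a quadratic program with linear constraints and, for every reward instance $\{\vec{y}_a\}_{a\in\mathcal{A}}$, it has at least one optimal solution. In particular, after poisoning with such a solution, the UCB algorithm pulls $a^*$ at round $T+1$.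
   Context: Offline attack setting: a bandit algorithm pulls arms $a_1,\dots,a_T$, receiving rewards $r_t=\mu_{a_t}+\eta_t$ with zero-mean $\sigma$-subGaussian noise; $m_a$ is the number of rounds $t\le T$ with $a_t=a$, $\vec{y}_a=(r_t:a_t=a)^T$, and an attacker replaces arm $a$'s rewards by $\vec{y}_a+\vec{\epsilon}_a$ before the algorithm updates. $\mathbf{1}$ is the all-ones vector. The UCB algorithm at round $t$ pulls $\arg\max_a \tilde{\mu}_a(t-1)+3\sigma\sqrt{\log t/N_a(t-1)}$, where $\tilde{\mu}_a(t-1)$ is the (poisoned) empirical mean and $N_a(t-1)$ the number of pulls of arm $a$ up to round $t-1$. *)

(* Defs.v *)
From HB Require Import structures.
From mathcomp Require Import all_boot all_order all_algebra.
From mathcomp Require Import all_classical all_reals all_analysis.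
Set Implicit Arguments. Unset Strict Implicit. Unset Printing Implicit Defensive.
Import Order.TTheory GRing.Theory Num.Theory.
Local Open Scope ring_scope.

Definition poisoned_mean (R : realType) (K : nat) (m : 'I_K -> nat)
  (y eps : forall a : 'I_K, 'I_(m a) -> R) (a : 'I_K) : R :=
  (\sum_(i < m a) (y a i + eps a i)) / (m a)%:R.

Definition ucb_index (R : realType) (K : nat) (m : 'I_K -> nat)
  (sigma : R) (T : nat) (y eps : forall a : 'I_K, 'I_(m a) -> R)
  (a : 'I_K) : R :=
  poisoned_mean y eps a
  + 3 * sigma * Num.sqrt (ln (T.+1)%:R / (m a)%:R).

Definition attack_cost (R : realType) (K : nat) (m : 'I_K -> nat)
  (eps : forall a : 'I_K, 'I_(m a) -> R) : R :=
  \sum_(a < K) \sum_(i < m a) (eps a i) ^+ 2.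

Definition P2_feasible (R : realType) (K : nat) (m : 'I_K -> nat)
  (sigma xi : R) (T : nat) (astar : 'I_K)
  (y eps : forall a : 'I_K, 'I_(m a) -> R) : Prop :=
  forall a : 'I_K, a != astar ->
    ucb_index sigma T y eps a + xi <= ucb_index sigma T y eps astar.

Definition P2_optimal (R : realType) (K : nat) (m : 'I_K -> nat)
  (sigma xi : R) (T : nat) (astar : 'I_K)
  (y eps : forall a : 'I_K, 'I_(m a) -> R) : Prop :=
  P2_feasible sigma xi T astar y eps /\
  forall eps' : forall a : 'I_K, 'I_(m a) -> R,
    P2_feasible sigma xi T astar y eps' ->
    attack_cost eps <= attack_cost eps'.

(* UCB at round T+1 (after poisoning with eps) pulls astar: astar is the
   unique maximizer of the UCB index, so the argmax is astar regardless of
   tie-breaking. *)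
Definition ucb_pulls (R : realType) (K : nat) (m : 'I_K -> nat)
  (sigma : R) (T : nat) (y eps : forall a : 'I_K, 'I_(m a) -> R)
  (astar : 'I_K) : Prop :=
  forall a : 'I_K, a != astar ->
    ucb_index sigma T y eps a < ucb_index sigma T y eps astar.

(* Main.v *)
Require Import Defs.
From HB Require Import structures.
From mathcomp Require Import all_boot all_order all_algebra.
From mathcomp Require Import all_classical all_reals all_analysis.
From mathcomp Require Import ring lra.
Import Order.TTheory GRing.Theory Num.Theory.
Import numFieldNormedType.Exports.
Local Open Scope ring_scope.

Lemma cont_sum (R : realType) (I : Type) (s : seq I) (F : I -> R -> R) :
  (forall i, continuous (F i)) -> continuous (fun t => \sum_(i <- s) F i t).
Proof.
move=> Fc; elim: s => [|i s IH] x.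
  under eq_fun do rewrite big_nil. exact: cvg_cst.
under eq_fun do rewrite big_cons.
exact: (@continuousD _ R^o _ (F i) (fun t => \sum_(j <- s) F j t) x (Fc i x) (IH x)).
Qed.

Lemma cont_term (R : realType) (k b : R) :
  continuous (fun t : R => k * (Num.min 0 (t + b)) ^+ 2).
Proof.
move=> x.
have hm : {for x, continuous (fun t : R => Num.min 0 (t + b))}.
  apply: (@continuous_min R R (fun _ => 0) (fun t => t + b) x).
    exact: cvg_cst.
  exact: (@continuousD _ R^o _ id (fun _ => b) x (@cvg_id _ _) (cvg_cst _)).
apply: (@continuousM _ R (fun _ => k) _ x); first exact: cvg_cst.
exact: (@continuousM _ R _ _ x hm hm).
Qed.

Lemma cont_sq (R : realType) (k : R) : continuous (fun t : R => k * t ^+ 2).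
Proof.
move=> x.
have hs : {for x, continuous (fun t : R => t ^+ 2)}.
  exact: (@continuousM _ R id id x (@cvg_id _ _) (@cvg_id _ _)).
exact: (@continuousM _ R (fun _ => k) (fun t => t ^+ 2) x (cvg_cst _) hs).
Qed.

Lemma exists_min (R : realType) (f : R -> R) (c : R) :
  continuous f -> 0 < c -> (forall t, c * t ^+ 2 <= f t) ->
  exists t0, forall t, f t0 <= f t.
Proof.
move=> fc c0 fge.
have [M [M1 cM]] : exists M, 1 <= M /\ f 0 < c * M.
  exists (`|f 0| / c + 1); split; first by rewrite lerDr divr_ge0 // ltW.
  rewrite mulrDr mulr1 (mulrC c) divfK; last by rewrite gt_eqF.
  by apply: (le_lt_trans (ler_norm _)); rewrite ltrDl.
have MM : - M <= M by lra.
have [t0 t0in t0min] := @EVT_min R f (- M) M MM (continuous_subspaceT fc).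
exists t0 => t.
have h0 : f t0 <= f 0 by apply: t0min; rewrite in_itv /=; apply/andP; split; lra.
case: (boolP (t \in `[- M, M])) => tin; first exact: t0min.
move: tin; rewrite in_itv /= negb_and -!ltNge => tM.
have : c * M < c * t ^+ 2.
  rewrite ltr_pM2l //.
  case/orP: tM => tM; nra.
have := fge t; lra.
Qed.

Lemma cs_ineq (R : realType) n (e : 'I_n -> R) : (0 < n)%N ->
  n%:R * ((\sum_i e i) / n%:R) ^+ 2 <= \sum_i e i ^+ 2.
Proof.
move=> n0; set S := \sum_i e i; set x := S / n%:R.
have nz : (n%:R : R) != 0 by rewrite pnatr_eq0 -lt0n.
have Sx : S = n%:R * x by rewrite /x mulrC divfK.
have : 0 <= \sum_i (e i - x) ^+ 2 by apply: sumr_ge0 => i _; exact: sqr_ge0.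
rewrite (eq_bigr (fun i => e i ^+ 2 - (e i * x *+ 2) + x ^+ 2)); last first.
  by move=> i _; rewrite sqrrB.
rewrite big_split sumrB /= sumr_const card_ord.
rewrite [X in _ - X + _](eq_bigr (fun i => (2 * x) * e i)); last first.
  by move=> i _; rewrite -mulr_natl; ring.
rewrite -mulr_sumr -/S Sx -mulr_natl.
move=> h; nra.
Qed.

Lemma min_sq (R : realType) (u v : R) : u <= v -> Num.min 0 v ^+ 2 <= u ^+ 2.
Proof.
move=> uv; rewrite /Order.min; case: ifP => v0.
  by rewrite expr0n /= sqr_ge0.
move: v0 => /negbT; rewrite -leNgt => v0; nra.
Qed.

Lemma pm_eq (R : realType) (K : nat) (m : 'I_K -> nat)
  (y eps : forall a : 'I_K, 'I_(m a) -> R) a :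
  poisoned_mean y eps a = (\sum_i y a i) / (m a)%:R + (\sum_i eps a i) / (m a)%:R.
Proof. by rewrite /poisoned_mean big_split mulrDl. Qed.

Theorem theorem2 (R : realType) (K : nat) (astar : 'I_K) (T : nat)
  (sigma xi : R) (m : 'I_K -> nat)
  (y : forall a : 'I_K, 'I_(m a) -> R) :
  (1 <= T)%N -> 0 < sigma -> 0 < xi -> (forall a, (0 < m a)%N) ->
  exists eps : forall a : 'I_K, 'I_(m a) -> R,
    P2_optimal sigma xi T astar y eps /\ ucb_pulls sigma T y eps astar.
Proof.
move=> T1 s0 xi0 m0.
pose Y a := \sum_(i < m a) y a i.
pose cc a := 3 * sigma * Num.sqrt (ln (T.+1)%:R / (m a)%:R).
pose b a := cc astar - cc a - xi + Y astar / (m astar)%:R - Y a / (m a)%:R.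
pose F a : R -> R := if a == astar then (fun t => (m a)%:R * t ^+ 2)
  else (fun t => (m a)%:R * Num.min 0 (t + b a) ^+ 2).
pose f t := \sum_(a < K) F a t.
have fc : continuous f.
  apply: cont_sum => a; rewrite /F; case: eqP => _; [exact: cont_sq | exact: cont_term].
have mpos : forall a, (0 : R) < (m a)%:R by move=> a; rewrite ltr0n.
have fge : forall t, (m astar)%:R * t ^+ 2 <= f t.
  move=> t; rewrite /f (bigD1 astar) //= {1}/F eqxx lerDl.
  apply: sumr_ge0 => a _; rewrite /F; case: ifP => _;
    apply: mulr_ge0; by [apply: ltW | apply: sqr_ge0].
have [t0 t0min] := @exists_min R f _ fc (mpos astar) fge.
pose hv a := if a == astar then t0 else Num.min 0 (t0 + b a).
pose eps := fun (a : 'I_K) (_ : 'I_(m a)) => hv a.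
have epsm : forall a, (\sum_(i < m a) eps a i) / (m a)%:R = hv a.
  move=> a; rewrite /eps sumr_const card_ord. rewrite -[hv a *+ _]mulr_natr mulfK //.
  by rewrite gt_eqF.
have feas : P2_feasible sigma xi T astar y eps.
  move=> a aa; rewrite /ucb_index !pm_eq !epsm /hv eqxx (negbTE aa).
  have : Num.min 0 (t0 + b a) <= t0 + b a by rewrite ge_min lexx orbT.
  rewrite /b /cc /Y; lra.
exists eps; split; last first.
  move=> a aa; have := feas a aa; lra.
split => // eps' feas'.
pose x a := (\sum_(i < m a) eps' a i) / (m a)%:R.
have cost_eq : attack_cost eps = f t0.
  rewrite /attack_cost /f; apply: eq_bigr => a _.
  by rewrite /eps sumr_const card_ord /F /hv; case: ifP => _; rewrite mulr_natl.
rewrite cost_eq; apply: (le_trans (t0min (x astar))).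
apply: (@le_trans _ _ (\sum_(a < K) (m a)%:R * x a ^+ 2)).
  apply: ler_sum => a _; rewrite /F; case: eqP => [->|/eqP aa] //.
  rewrite ler_pM2l //; apply: min_sq.
  have := feas' a aa; rewrite /ucb_index !pm_eq -/(x a) -/(x astar).
  rewrite /b /cc /Y; lra.
apply: ler_sum => a _; exact: cs_ineq.
Qed.
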